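(* Let $\nu\in\mathbb{C}$, $k\in\mathbb{N}$, $\epsilon_1,\epsilon_2\in\{\pm1\}$, $E_0=\epsilon_1(4k+2)+4\epsilon_2\nu$, and $$Y(z)=z^{2\epsilon_1\epsilon_2\nu+1}e^{-\epsilon_1z^2/2}\,{}_1F_1(-k,2\epsilon_1\epsilon_2\nu+1,\epsilon_1z^2)$$ (with ${}_1F_1$ replaced by its regularization $\frac{\Gamma(2\epsilon_1\epsilon_2\nu+1+k)}{\Gamma(2\epsilon_1\epsilon_2\nu+1)}{}_1F_1(\cdots)$ when needed). Then there exists $M\in\mathbb{C}(z,E)$, regular at $E=E_0$, with $M(z,E_0)=-Y'(z)/Y(z)$ and such that $$H(z,E):=M^2z^2+Mz-M'z^2-z^4+z^2E-4\nu^2+1=O((E-E_0)^2)\quad (E\to E_0)$$ if and only if $2\epsilon_1\epsilon_2\nu+k\in\mathbb{N}$.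
   Context: $'$ denotes $\partial/\partial z$. $Y$ is a hyperexponential solution of $z^2Y''-zY'+(-z^4+E_0z^2-4\nu^2+1)Y=0$; equivalently $M(z,E_0)=-Y'/Y$ makes $H(z,E_0)=0$. In the paper, this expresses that the polynomial $w(E)$ in the factorization $H=w(E)P(z)/Q(z,E)$ may have a double root at $E_0$, which is required for the resulting potential to be quantum integrable. *)

(* Defs.v *)
(* Bivariate polynomials in (z,E) are {poly {poly C}}:
   the OUTER variable is E, the INNER variable (coefficients) is z. *)
From HB Require Import structures.
From mathcomp Require Import all_boot all_order all_algebra.
Set Implicit Arguments. Unset Strict Implicit. Unset Printing Implicit Defensive.
Import Order.TTheory GRing.Theory Num.Theory.
Local Open Scope ring_scope.

Section Defs.
Variable C : numClosedFieldType.

Definition poch (x : C) (n : nat) : C := \prod_(i < n) (x + i%:R).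

(* Regularized  Gamma(b+k)/Gamma(b) * 1F1(-k; b; x), as a polynomial in x:
   sum_{j<=k} (-k)_j (b)_k/(b)_j x^j / j!  with (b)_k/(b)_j = (b+j)_{k-j}. *)
Definition hyp1F1reg (k : nat) (b : C) : {poly C} :=
  \sum_(j < k.+1)
     ((poch (- k%:R) j * poch (b + j%:R) (k - j) / (j`!)%:R) *: 'X^j).

Definition Ypoly (k : nat) (b e1 : C) : {poly C} :=
  hyp1F1reg k b \Po (e1 *: 'X^2).

(* Y(z) = z^b e^{-e1 z^2/2} P(z);  its logarithmic derivative is the rational
   function Y'/Y = b/z - e1 z + P'/P = logdY_num / logdY_den. *)
Definition logdY_num (k : nat) (b e1 : C) : {poly C} :=
  b *: Ypoly k b e1 - e1 *: ('X^2 * Ypoly k b e1) + 'X * (Ypoly k b e1)^`().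
Definition logdY_den (k : nat) (b e1 : C) : {poly C} := 'X * Ypoly k b e1.

Definition zB : {poly {poly C}} := ('X : {poly C})%:P.
Definition cstB (c : C) : {poly {poly C}} := (c%:P)%:P.
Definition dz (A : {poly {poly C}}) : {poly {poly C}} :=
  map_poly (fun p : {poly C} => p^`()) A.

(* For M = A/B, H(z,E) = M^2 z^2 + M z - M' z^2 - z^4 + z^2 E - 4 nu^2 + 1
   equals riccatiN nu A B / B^2. *)
Definition riccatiN (nu : C) (A B : {poly {poly C}}) : {poly {poly C}} :=
  A ^+ 2 * zB ^+ 2 + A * B * zB - (dz A * B - A * dz B) * zB ^+ 2
  + (- zB ^+ 4 + zB ^+ 2 * 'X - cstB (4 * nu ^+ 2) + 1) * B ^+ 2.

End Defs.

(* Main.v *)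
Require Import Defs.
From HB Require Import structures.
From mathcomp Require Import all_boot all_order all_algebra.
From mathcomp Require Import ring zify.
From Stdlib Require Import Classical.
Import Order.TTheory GRing.Theory Num.Theory.
Local Open Scope ring_scope.

Section Main.
Variable C : numClosedFieldType.



Lemma dz_coef (A : {poly {poly C}}) i : (dz A)`_i = (A`_i)^`().
Proof. by rewrite /dz coef_map_id0 // deriv0. Qed.

Lemma dzD (A B : {poly {poly C}}) : dz (A + B) = dz A + dz B.
Proof. by apply/polyP=> i; rewrite coefD !dz_coef coefD derivD. Qed.

Lemma dzN (A : {poly {poly C}}) : dz (- A) = - dz A.
Proof. by apply/polyP=> i; rewrite coefN !dz_coef coefN derivN. Qed.

Lemma dzC (p : {poly C}) : dz p%:P = (p^`())%:P.
Proof. apply/polyP=> i; rewrite dz_coef !coefC; case: i => [|i] //=; exact: deriv0. Qed.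

Lemma dzM (A B : {poly {poly C}}) : dz (A * B) = dz A * B + A * dz B.
Proof.
apply/polyP=> i; rewrite coefD dz_coef !coefM raddf_sum -big_split /=.
by apply: eq_bigr => j _; rewrite derivM !dz_coef.
Qed.

Lemma dzX : dz ('X : {poly {poly C}}) = 0.
Proof.
apply/polyP=> i; rewrite dz_coef coefX coef0.
by case: (i == 1)%N; rewrite ?deriv0 // -polyC1 derivC.
Qed.

Definition V0p (E0 nu : C) : {poly C} := - 'X^4 + 'X^2 * E0%:P - (4 * nu ^+ 2)%:P + 1.

Definition N0p E0 nu (a0 b0 : {poly C}) :=
  a0 ^+ 2 * 'X ^+ 2 + a0 * b0 * 'X - (a0^`() * b0 - a0 * b0^`()) * 'X ^+ 2
  + V0p E0 nu * b0 ^+ 2.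

Definition N1p E0 nu (a0 a1 b0 b1 : {poly C}) :=
  2%:R * a0 * a1 * 'X ^+ 2 + (a0 * b1 + a1 * b0) * 'X
  - (a0^`() * b1 + a1^`() * b0 - a0 * b1^`() - a1 * b0^`()) * 'X ^+ 2
  + 2%:R * V0p E0 nu * b0 * b1 + 'X ^+ 2 * b0 ^+ 2.

Lemma ric_expand E0 nu (a0 a1 b0 b1 : {poly C}) (r s : {poly {poly C}}) :
  let e := 'X - (E0%:P)%:P in
  exists J, riccatiN nu (a0%:P + e * a1%:P + e ^+ 2 * r) (b0%:P + e * b1%:P + e ^+ 2 * s)
    = (N0p E0 nu a0 b0)%:P + e * (N1p E0 nu a0 a1 b0 b1)%:P + e ^+ 2 * J.
Proof.
move=> e.
have de : dz e = 0.
  by rewrite /e dzD dzN dzX dzC derivC oppr0 addr0.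
have dA : forall (x y : {poly C}) t, dz (x%:P + e * y%:P + e ^+ 2 * t)
     = (x^`())%:P + e * (y^`())%:P + e ^+ 2 * dz t.
  have de2 : dz (e ^+ 2) = 0 by rewrite expr2 dzM de; ring.
  move=> x y t; rewrite !dzD !dzM !dzC ?de2 ?de; ring.
rewrite /riccatiN !dA /zB /cstB.
set z := ('X : {poly C})%:P.
set a := a0%:P; set b := a1%:P; set g := b0%:P; set d := b1%:P.
set a' := (a0^`())%:P; set b' := (a1^`())%:P; set g' := (b0^`())%:P; set d' := (b1^`())%:P.
set r' := dz r; set s' := dz s.
have hX : ('X : {poly {poly C}}) = e + (E0%:P)%:P by rewrite /e; ring.
set V0 := (V0p E0 nu)%:P.
have hV : - z ^+ 4 + z ^+ 2 * 'X - ((4 * nu ^+ 2)%:P)%:P + 1 = V0 + e * z ^+ 2.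
  rewrite hX /V0 /V0p /z; ring.
rewrite hV.
exists ((b ^+ 2 + 2%:R * a * r + 2%:R * e * b * r + e ^+ 2 * r ^+ 2) * z ^+ 2
  + (b * d + a * s + g * r + e * (b * s + d * r) + e ^+ 2 * r * s) * z
  - ((b' * d + a' * s + g * r' + e * (b' * s + d * r') + e ^+ 2 * r' * s)
     - (b * d' + a * s' + g' * r + e * (b * s' + d' * r) + e ^+ 2 * r * s')) * z ^+ 2
  + V0 * (d ^+ 2 + 2%:R * g * s + 2%:R * e * d * s + e ^+ 2 * s ^+ 2)
  + 2%:R * z ^+ 2 * g * d + e * z ^+ 2 * (d ^+ 2 + 2%:R * g * s + 2%:R * e * d * s + e ^+ 2 * s ^+ 2)).
rewrite /N0p /N1p /V0 /a /b /g /d /a' /b' /g' /d' /z.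
ring.
Qed.


Lemma taylor2 (A : {poly {poly C}}) (c : {poly C}) :
  exists a1 r, A = (A.[c])%:P + ('X - c%:P) * a1%:P + ('X - c%:P) ^+ 2 * r.
Proof.
have : root (A - (A.[c])%:P) c by rewrite /root hornerD hornerN hornerC subrr.
case/factor_theorem => q hq.
have : root (q - (q.[c])%:P) c by rewrite /root hornerD hornerN hornerC subrr.
case/factor_theorem => r hr.
exists q.[c], r.
have hA : A = q * ('X - c%:P) + A.[c]%:P by rewrite -hq; ring.
have hq' : q = r * ('X - c%:P) + q.[c]%:P by rewrite -hr; ring.
by rewrite {1}hA {1}hq'; ring.
Qed.

Lemma ric_cond E0 nu (A B G : {poly {poly C}}) :
  riccatiN nu A B = ('X - (E0%:P)%:P) ^+ 2 * G ->
  exists a1 b1, N0p E0 nu A.[E0%:P] B.[E0%:P] = 0 /\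
                N1p E0 nu A.[E0%:P] a1 B.[E0%:P] b1 = 0.
Proof.
set c := E0%:P; set a0 := A.[c]; set b0 := B.[c].
have [a1 [r hA]] := taylor2 A c; have [b1 [s hB]] := taylor2 B c.
rewrite -/a0 in hA; rewrite -/b0 in hB.
rewrite hA hB.
have [J ->] := ric_expand E0 nu a0 a1 b0 b1 r s.
set e := 'X - c%:P => h.
exists a1, b1.
have he : e.[c] = 0 by rewrite /e hornerXsubC subrr.
have h0 : N0p E0 nu a0 b0 = 0.
  have := congr1 (fun p => p.[c]) h; rewrite /= !hornerD !hornerM !hornerC.
  rewrite ?horner_exp he ?mul0r ?expr0n /= ?mul0r ?addr0 //.
split=> //.
rewrite h0 add0r in h.
have ne : e != 0 by rewrite /e polyXsubC_eq0.
have h1 : (N1p E0 nu a0 a1 b0 b1)%:P = e * (G - J).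
  apply: (mulfI ne).
  have -> : e * (N1p E0 nu a0 a1 b0 b1)%:P = e ^+ 2 * G - e ^+ 2 * J by rewrite -h; ring.
  ring.
have := congr1 (fun p => p.[c]) h1; rewrite /= hornerC hornerM he mul0r //.
Qed.



Lemma poch0 (x : C) : poch x 0 = 1.
Proof. by rewrite /poch big_ord0. Qed.

Lemma pochS (x : C) n : poch x n.+1 = poch x n * (x + n%:R).
Proof. by rewrite /poch big_ord_recr. Qed.

Lemma pochSl (x : C) n : poch x n.+1 = x * poch (x + 1) n.
Proof.
rewrite /poch big_ord_recl; congr (_ * _); first by rewrite /= addr0.
by apply: eq_bigr => i _; rewrite lift0 mulrSr; ring.
Qed.

Lemma pochD (x : C) i j : poch x (i + j) = poch x i * poch (x + i%:R) j.
Proof.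
elim: j => [|j IH]; first by rewrite addn0 poch0 mulr1.
by rewrite addnS !pochS IH natrD; ring.
Qed.

Lemma poch_negk k j : poch (- (k%:R : C)) j = (-1) ^+ j * (k ^_ j)%:R.
Proof.
elim: j => [|j IH]; first by rewrite poch0 expr0 ffactn0 mul1r.
rewrite pochS IH ffactnSr natrM exprS.
case: (leqP j k) => hjk.
  rewrite natrB //; ring.
rewrite ffact_small //; ring.
Qed.

Definition fco k (b : C) j := poch (- k%:R) j * poch (b + j%:R) (k - j) / (j`!)%:R.

Lemma fact_neq0 n : (n`!)%:R != 0 :> C.
Proof. by rewrite pnatr_eq0 -lt0n fact_gt0. Qed.

Lemma fco_poch k (b : C) j : (j <= k)%N ->
  fco k b j * poch b j = (-1) ^+ j * ('C(k, j))%:R * poch b k.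
Proof.
move=> hj; rewrite /fco poch_negk -bin_ffact natrM.
have -> : poch b k = poch b j * poch (b + j%:R) (k - j) by rewrite -pochD subnKC.
have := fact_neq0 j; set F := (j`!)%:R => hF.
by field.
Qed.

Lemma fco_k k (b : C) : fco k b k = (-1) ^+ k.
Proof.
rewrite /fco poch_negk ffactnn subnn poch0.
have := fact_neq0 k; set F := (k`!)%:R => hF.
by field.
Qed.

Lemma alt_shift (g : nat -> C) k :
  \sum_(0 <= j < k.+2) (-1) ^+ j * ('C(k.+1, j))%:R * g j =
  \sum_(0 <= j < k.+1) (-1) ^+ j * ('C(k, j))%:R * (g j - g j.+1).
Proof.
rewrite big_nat_recl //.
have -> : \sum_(0 <= i < k.+1) (-1) ^+ i.+1 * ('C(k.+1, i.+1))%:R * g i.+1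
   = \sum_(0 <= i < k.+1) (-1) ^+ i.+1 * ('C(k, i.+1))%:R * g i.+1
     - \sum_(0 <= i < k.+1) (-1) ^+ i * ('C(k, i))%:R * g i.+1.
  rewrite -sumrB; apply: eq_bigr => i _; rewrite binS natrD exprS; ring.
have -> : \sum_(0 <= j < k.+1) (-1) ^+ j * ('C(k, j))%:R * (g j - g j.+1)
   = \sum_(0 <= j < k.+1) (-1) ^+ j * ('C(k, j))%:R * g j
     - \sum_(0 <= j < k.+1) (-1) ^+ j * ('C(k, j))%:R * g j.+1.
  rewrite -sumrB; apply: eq_bigr => i _; ring.
rewrite [in RHS]big_nat_recl // [\sum_(0 <= i < k.+1) _ * _ * g i.+1 in LHS]big_nat_recr //=.
rewrite ?bin0 (@bin_small k k.+1) // ?expr0.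
ring.
Qed.

Lemma alt_poch k : forall (x : C) m, (m <= k)%N ->
  \sum_(0 <= j < k.+1) (-1) ^+ j * ('C(k, j))%:R * poch (x + j%:R) m =
  if m == k then (-1) ^+ k * (k`!)%:R else 0.
Proof.
elim: k => [|k IH] x m.
  rewrite leqn0 => /eqP ->; rewrite big_nat1 /= poch0 bin0 expr0 fact0 !mul1r //.
move=> hm; rewrite alt_shift.
case: m hm => [|m] hm.
  rewrite big1 // => j _; rewrite !poch0 subrr mulr0 //.
have -> : \sum_(0 <= j < k.+1) (-1) ^+ j * ('C(k, j))%:R
     * (poch (x + j%:R) m.+1 - poch (x + j.+1%:R) m.+1)
   = - (m.+1%:R) * \sum_(0 <= j < k.+1) (-1) ^+ j * ('C(k, j))%:R
     * poch ((x + 1) + j%:R) m.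
  rewrite mulr_sumr; apply: eq_bigr => j _.
  rewrite pochSl pochS.
  have -> : x + j.+1%:R = x + j%:R + 1 by rewrite mulrSr; ring.
  have -> : x + 1 + j%:R = x + j%:R + 1 by ring.
  rewrite mulrSr; ring.
rewrite IH // eqSS; case: (m == k) / eqP => [->|_]; last by rewrite mulr0.
rewrite factS natrM exprS mulrSr; ring.
Qed.


Lemma hypE k (b : C) : hyp1F1reg k b = \poly_(j < k.+1) fco k b j.
Proof. by rewrite poly_def. Qed.

Lemma sum_coef_sum (h : nat -> C) N n (p : 'I_n -> {poly C}) :
  \sum_(i < N) h i * (\sum_(m < n) p m)`_i = \sum_(m < n) \sum_(i < N) h i * (p m)`_i.
Proof.
rewrite exchange_big /=; apply: eq_bigr => i _.
by rewrite coef_sum mulr_sumr.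
Qed.

Lemma sum_hX (h : nat -> C) N n c : (n < N)%N ->
  \sum_(i < N) h i * (c *: 'X^n)`_i = c * h n.
Proof.
move=> hn.
rewrite (eq_bigr (fun i : 'I_N => if (i : nat) == n then c * h i else 0)); last first.
  move=> i _; rewrite coefZ coefXn; case: eqP => _ /=; ring.
rewrite -big_mkcond /=. rewrite (big_ord1_eq _ (fun j => c * h j)) hn //.
Qed.

Lemma obs_id k (b : C) N : (2 * k < N)%N ->
  \sum_(i < N) poch b i * ((hyp1F1reg k b) ^+ 2)`_i = (k`!)%:R * poch b k.
Proof.
move=> hN.
have hF2 : (hyp1F1reg k b) ^+ 2 = \sum_(m < k.+1) \sum_(j < k.+1)
    (fco k b m * fco k b j) *: 'X^(m + j).
  rewrite hypE poly_def expr2 mulr_suml; apply: eq_bigr => m _.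
  rewrite mulr_sumr; apply: eq_bigr => j _.
  by rewrite -scalerAl -scalerAr scalerA exprD.
rewrite hF2 sum_coef_sum.
rewrite (eq_bigr (fun m : 'I_k.+1 => fco k b m * (poch b k *
      \sum_(0 <= j < k.+1) (-1) ^+ j * ('C(k, j))%:R * poch (b + j%:R) m))); last first.
  move=> m _; rewrite sum_coef_sum big_mkord mulr_sumr mulr_sumr.
  apply: eq_bigr => j _; rewrite sum_hX; last first.
    have := ltn_ord m; have := ltn_ord j; lia.
  rewrite addnC pochD.
  have := fco_poch k b j (ltnSE (ltn_ord j)) => h.
  have -> : fco k b m * fco k b j * (poch b j * poch (b + j%:R) m)
    = fco k b m * ((fco k b j * poch b j) * poch (b + j%:R) m) by ring.
  rewrite h; ring.
rewrite big_ord_recr /= alt_poch // eqxx big1 ?add0r.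
  rewrite fco_k.
  have -> : (-1) ^+ k * (poch b k * ((-1) ^+ k * (k`!)%:R))
     = ((-1) * (-1)) ^+ k * (poch b k * (k`!)%:R) :> C by rewrite exprMn; ring.
  rewrite mulrNN mulr1 expr1n; ring.
move=> m _; rewrite alt_poch; last by have := ltn_ord m; lia.
by rewrite (ltn_eqF (ltn_ord m)) !mulr0.
Qed.



Lemma XD_coef (D : {poly C}) i : ('X * D^`())`_i = D`_i *+ i.
Proof. by rewrite coefXM; case: i => [|i] //=; rewrite coef_deriv. Qed.

Lemma dvd_XD (D : {poly C}) : D != 0 -> D %| 'X * D^`() ->
  D = lead_coef D *: 'X^((size D).-1).
Proof.
move=> hD /dvdpP [h hh].
have hs : (size h <= 1)%N.
  case: (eqVneq h 0) => [->|hh0]; first by rewrite size_poly0.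
  have : (size ('X * D^`())%R <= size D)%N.
    case: (eqVneq D^`() 0) => [->|hd0]; first by rewrite mulr0 size_poly0.
    rewrite mulrC size_mulX //; exact: lt_size_deriv.
  have hD0 : (0 < size D)%N by rewrite size_poly_gt0.
  rewrite hh size_mul // -subn1 => h'. move: hD0 h'. clear. move: (size h) (size D). lia.
have hc := size1_polyC hs. set l := h`_0 in hc.
have key : forall i, D`_i *+ i = l * D`_i.
  by move=> i; rewrite -XD_coef hh hc coefCM.
set d := (size D).-1.
have hld : D`_d != 0 by rewrite -lead_coefE lead_coef_eq0.
have hl : l = d%:R.
  apply: (mulIf hld); rewrite -key mulr_natl //.
apply/polyP => i; rewrite coefZ coefXn.
case: (eqVneq i d) => [->|hid]; first by rewrite mulr1 lead_coefE.
rewrite mulr0.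
have := key i; rewrite hl => hk.
have : (i%:R - d%:R) * D`_i = 0 by rewrite mulrBl (mulr_natl _ i) hk subrr.
by move/eqP; rewrite mulf_eq0 subr_eq0 eqr_nat (negbTE hid) /= => /eqP.
Qed.

Lemma reduce_ode (U D Q : {poly C}) (g e : C) : D != 0 ->
  'X * (U^`() * D - U * D^`()) = (g%:P + e%:P * 'X^2) * U * D + 'X * Q * D ^+ 2 ->
  exists d c U1, c != 0 /\
    'X * U1^`() - (d%:R + g)%:P * U1 - e%:P * ('X^2 * U1) = c%:P * ('X^(d.+1) * Q).
Proof.
move=> hD hE.
set G := gcdp U D.
have hG : G != 0 by rewrite gcdp_eq0 negb_and hD orbT.
set U1 := U %/ G; set D1 := D %/ G.
have eU : U = U1 * G by rewrite divpK // dvdp_gcdl.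
have eD : D = D1 * G by rewrite divpK // dvdp_gcdr.
have cop : coprimep U1 D1 by apply: coprimep_div_gcd; rewrite hD orbT.
have hD1 : D1 != 0 by apply: contraNneq hD => h0; rewrite eD h0 mul0r.
rewrite eU eD !derivM in hE.
have e1 : 'X * (U1^`() * D1 - U1 * D1^`()) = (g%:P + e%:P * 'X^2) * U1 * D1 + 'X * Q * D1 ^+ 2.
  apply: (mulfI (expf_neq0 2 hG)).
  transitivity ('X * ((U1^`() * G + U1 * G^`()) * (D1 * G) - U1 * G * (D1^`() * G + D1 * G^`()))).
    ring.
  rewrite hE; ring.
have dvd : D1 %| 'X * D1^`().
  have : D1 %| U1 * ('X * D1^`()).
    apply/dvdpP; exists ('X * U1^`() - (g%:P + e%:P * 'X^2) * U1 - 'X * Q * D1).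
    transitivity ('X * U1^`() * D1 - 'X * (U1^`() * D1 - U1 * D1^`())); first by ring.
    rewrite e1; ring.
  by rewrite Gauss_dvdpr // coprimep_sym.
have hD1e := dvd_XD D1 hD1 dvd.
set c := lead_coef D1 in hD1e; set d := (size D1).-1 in hD1e.
have hc : c != 0 by rewrite lead_coef_eq0.
have xd : 'X * D1^`() = (d%:R)%:P * D1.
  apply/polyP => i; rewrite XD_coef coefCM hD1e coefZ coefXn.
  by case: eqP => [->|] /=; rewrite ?mulr1 ?mulr0 ?mul0rn // mulr_natl.
exists d, c, U1; split => //.
apply: (mulfI hD1).
transitivity ('X * (U1^`() * D1 - U1 * D1^`()) - (g%:P + e%:P * 'X^2) * U1 * D1
   + U1 * ('X * D1^`() - (d%:R)%:P * D1)); first by ring.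
rewrite e1 xd subrr mulr0 addr0.
have h2 : c%:P * ('X^(d.+1) * Q) = 'X * Q * D1 by rewrite hD1e -mul_polyC exprS; ring.
rewrite h2; ring.
Qed.





Lemma recur_obstr (U Q G : {poly C}) (b e1 c : C) d M0 :
  (e1 = 1 \/ e1 = -1) -> c != 0 ->
  (forall j, Q`_(2 * j)%N = e1 ^+ j * G`_j) ->
  'X * U^`() - (d%:R + (1 - 2 * b))%:P * U - (2 * e1)%:P * ('X^2 * U)
     = c%:P * ('X^(d.+1) * Q) ->
  (exists j, (0 < j)%N /\ b = j%:R) \/
  (exists N, (M0 <= N)%N /\ \sum_(j < N) poch b j * G`_j = 0).
Proof.
move=> he1 hc hQ hU.
have hcoef : forall n, U`_n *+ n - (d%:R + (1 - 2 * b)) * U`_n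
    - 2 * e1 * (if (n < 2)%N then 0 else U`_(n - 2)%N)
    = c * (if (n < d.+1)%N then 0 else Q`_(n - d.+1)%N).
  move=> n; have := congr1 (fun p : {poly C} => p`_n) hU.
  by rewrite /= !coefB !coefCM !coefXnM XD_coef.
case: (classic (exists j, (0 < j)%N /\ b = j%:R)) => [h|hb]; [by left|right].
have hb' : forall j, (0 < j)%N -> b != j%:R.
  by move=> j hj; apply/eqP => e; apply: hb; exists j.
have stepA : forall n j', (0 < j')%N -> (n + 2 * j' = d.+1)%N -> U`_n = 0.
  elim/ltn_ind => n IH j' hj' hn.
  have := hcoef n; rewrite (_ : (n < d.+1)%N = true); last by lia.
  have -> : (if (n < 2)%N then 0 else U`_(n - 2)%N) = 0.
    case: (ltnP n 2) => hn2 //.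
    apply: (IH (n - 2)%N _ j'.+1) => //; lia.
  move=> h0.
  have : (n%:R - (d%:R + (1 - 2 * b))) * U`_n = 0.
    transitivity (U`_n *+ n - (d%:R + (1 - 2 * b)) * U`_n - 2 * e1 * 0).
      by rewrite -mulr_natl; ring.
    by rewrite h0 mulr0.
  move/eqP; rewrite mulf_eq0 => /orP [h|/eqP //].
  exfalso.
  have h' : (d.+1)%:R = (n + 2 * j')%:R :> C by rewrite hn.
  rewrite mulrSr natrD natrM in h'.
  have hd : (d%:R : C) = n%:R + 2%:R * j'%:R - 1 by rewrite -h'; ring.
  move: h; rewrite hd.
  have -> : n%:R - (n%:R + 2%:R * j'%:R - 1 + (1 - 2 * b)) = 2 * (b - j'%:R) :> C by ring.
  by rewrite mulf_eq0 subr_eq0 (negbTE (hb' j' hj')) orbF pnatr_eq0.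
pose T j := U`_(d.+1 + 2 * j)%N.
pose Tp j := if j is j0.+1 then T j0 else 0.
have rel : forall j, (2 * j%:R + 2 * b) * T j - 2 * e1 * Tp j = c * (e1 ^+ j * G`_j).
  move=> j; have := hcoef (d.+1 + 2 * j)%N.
  rewrite (_ : (d.+1 + 2 * j < d.+1)%N = false); last by lia.
  rewrite (_ : (d.+1 + 2 * j - d.+1)%N = 2 * j)%N; last by lia.
  rewrite hQ.
  have hm : (if (d.+1 + 2 * j < 2)%N then 0 else U`_(d.+1 + 2 * j - 2)%N) = Tp j.
    case: j => [|j0].
      case: (ltnP (d.+1 + 2 * 0) 2) => h2 //=.
      apply: (stepA _ 1%N) => //; lia.
    rewrite (_ : (d.+1 + 2 * j0.+1 < 2)%N = false); last by lia.
    by rewrite /Tp /T; congr (U`__); lia.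
  rewrite hm => <-; rewrite /T -[U`_(d.+1 + 2 * j)%N *+ _]mulr_natl; ring.
pose lam j := e1 ^+ j * poch b j.
have tele : forall N, \sum_(j < N) lam j * ((2 * j%:R + 2 * b) * T j - 2 * e1 * Tp j)
    = 2 * e1 * lam N * Tp N.
  elim=> [|N IH]; first by rewrite big_ord0 /Tp mulr0.
  rewrite big_ord_recr /= IH /lam exprS pochS.
  by case: he1 => ->; ring.
pose N := (M0 + size U)%N.
have hTN : Tp N = 0.
  rewrite /Tp; case E: N => [|N'] //.
  rewrite /T nth_default //; move: E; rewrite /N => E; apply: leq_trans (leq_addl M0 _) _; rewrite E; clear -E; lia.
have e2one : e1 * e1 = 1 by case: he1 => ->; ring.
have := tele N; rewrite hTN mulr0.
rewrite (eq_bigr (fun j : 'I_N => c * (poch b j * G`_j))); last first.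
  move=> j _; rewrite rel /lam.
  transitivity (c * (poch b j * G`_j) * (e1 * e1) ^+ j); first by rewrite exprMn; ring.
  by rewrite e2one expr1n mulr1.
rewrite -mulr_sumr => /eqP; rewrite mulf_eq0 (negbTE hc) /= => /eqP hs.
by exists N; split => //; rewrite /N; lia.
Qed.





Lemma coef_comp_even (p : {poly C}) (e1 : C) j :
  (p \Po (e1 *: 'X^2))`_(2 * j)%N = e1 ^+ j * p`_j.
Proof.
rewrite comp_polyE coef_sum.
rewrite (eq_bigr (fun i : 'I_(size p) => if (i : nat) == j then e1 ^+ j * p`_j else 0)); last first.
  move=> i _; rewrite exprZn -exprM !coefZ coefXn eqn_mul2l /= eq_sym.
  by case: eqP => [->|_] /=; rewrite ?mulr1 ?mulr0 //; ring.
rewrite -big_mkcond /= (big_ord1_eq _ (fun _ => e1 ^+ j * p`_j)).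
by case: ltnP => h //; rewrite nth_default // mulr0.
Qed.


Lemma fco_rec k (b : C) i : (i < k)%N ->
  (i.+1)%:R * (i%:R + b) * fco k b i.+1 = (i%:R - k%:R) * fco k b i.
Proof.
move=> hik; rewrite /fco pochS.
have -> : (k - i)%N = (k - i.+1).+1 by lia.
rewrite pochSl factS natrM.
have hF : (i`!)%:R != 0 :> C := fact_neq0 i.
have hi2 : i%:R + 1 != 0 :> C by rewrite -mulrSr pnatr_eq0.
rewrite !mulrSr.
have -> : b + (i%:R + 1) = b + i%:R + 1 by ring.
move: (poch _ i) (poch _ (k - i.+1)) hF => X1 X2; move: (i`!)%:R => F0 hF.
field.
by apply/andP; split.
Qed.


Lemma kumF k (b : C) :
  'X * (hyp1F1reg k b)^`()^`() + (b%:P - 'X) * (hyp1F1reg k b)^`()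
  + (k%:R)%:P * hyp1F1reg k b = 0.
Proof.
apply/polyP => i; rewrite coef0 mulrBl !(coefD, coefB, coefN, coefCM, XD_coef, coef_deriv).
rewrite hypE !coef_poly.
case: (ltngtP i k) => h.
- have h1 : (i.+1 < k.+1)%N by [].
  have h2 : (i < k.+1)%N by apply: ltnW.
  rewrite h1 h2.
  have hr := fco_rec k b i h.
  transitivity ((i.+1)%:R * (i%:R + b) * fco k b i.+1 + (k%:R - i%:R) * fco k b i).
    ring.
  rewrite hr; ring.
- have h1 : (i.+1 < k.+1)%N = false by apply/negbTE; rewrite -leqNgt; apply: ltnW.
  have h2 : (i < k.+1)%N = false by apply/negbTE; rewrite -leqNgt.
  rewrite h1 h2; ring.
- rewrite h ltnn ltnSn; ring.
Qed.



Lemma deriv_q (e1 : C) : (e1 *: 'X^2 : {poly C})^`() = (2 * e1)%:P * 'X.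
Proof. by rewrite derivZ derivXn /= expr1 -mul_polyC -mulr_natl; ring. Qed.

Lemma kumP k (b e1 : C) : (e1 = 1 \/ e1 = -1) ->
  let P := Ypoly k b e1 in
  'X * P^`()^`() + (2 * b - 1)%:P * P^`() - (2 * e1)%:P * ('X^2 * P^`())
  + (4 * e1 * k%:R)%:P * ('X * P) = 0.
Proof.
move=> he1 P.
set F := hyp1F1reg k b; set q := e1 *: ('X^2 : {poly C}).
have dP : P^`() = (F^`() \Po q) * ((2 * e1)%:P * 'X) by rewrite /P /Ypoly deriv_comp deriv_q.
have ddP : P^`()^`() = ((F^`()^`() \Po q) * ((2 * e1)%:P * 'X)) * ((2 * e1)%:P * 'X)
    + (F^`() \Po q) * (2 * e1)%:P.
  by rewrite dP derivM deriv_comp deriv_q derivM derivC derivX mul0r add0r mulr1.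
have hK := congr1 (fun p => p \Po q) (kumF k b).
rewrite /= !comp_polyD !comp_polyM comp_polyB comp_polyX !comp_polyC ?comp_poly0 in hK.
rewrite -/F in hK.
have hq : q = e1%:P * 'X^2 by rewrite /q mul_polyC.
rewrite ddP dP.
transitivity ((4 * e1)%:P * 'X * (q * (F^`()^`() \Po q) + (b%:P - q) * (F^`() \Po q)
   + (k%:R)%:P * (F \Po q))); last by rewrite hK mulr0.
rewrite hq /P /Ypoly -/F -/q hq.
by case: he1 => ->; ring.
Qed.

Lemma N0_id (k : nat) (nu e1 e2 : C) (Q0 : {poly C}) :
  (e1 = 1 \/ e1 = -1) -> (e2 = 1 \/ e2 = -1) ->
  let E0 := e1 * (4 * k%:R + 2) + 4 * e2 * nu in
  let b := 2 * e1 * e2 * nu + 1 in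
  let P := Ypoly k b e1 in
  N0p E0 nu (- (Q0 * P * logdY_num k b e1)) ('X * Q0 * P ^+ 2) =
  'X^3 * Q0 ^+ 2 * P ^+ 3 * ('X * P^`()^`() + (2 * b - 1)%:P * P^`()
     - (2 * e1)%:P * ('X^2 * P^`()) + (4 * e1 * k%:R)%:P * ('X * P)).
Proof.
move=> he1 he2 E0 b P.
rewrite /N0p /V0p /logdY_num -/P.
rewrite !derivE -!mul_polyC /E0 /b.
by case: he1 => ->; case: he2 => ->; ring.
Qed.

Lemma N1_id (E0 nu b e1 mm : C) (P Q0 U : {poly C}) :
  N1p E0 nu (- (Q0 * P * (b *: P - e1 *: ('X^2 * P) + 'X * P^`()))) U ('X * Q0 * P ^+ 2) 0 =
  'X^2 * Q0 * P * (- P * (('X * U^`() - (mm + 2 - 2 * b)%:P * U - (2 * e1)%:P * ('X^2 * U))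
      - 'X^2 * Q0 * P ^+ 2))
  + ('X * Q0^`() - mm%:P * Q0) * U * P ^+ 2 * 'X^2.
Proof.
rewrite /N1p !derivE -!mul_polyC; ring.
Qed.


Definition Lop (beta e1 : C) (V : {poly C}) : {poly C} :=
  'X * V^`() - beta%:P * V - (2 * e1)%:P * ('X^2 * V).
Definition ImL beta e1 (R : {poly C}) := exists V, Lop beta e1 V = R.

Lemma ImL0 beta e1 : ImL beta e1 0.
Proof. by exists 0; rewrite /Lop deriv0 !mulr0 subrr subr0. Qed.

Lemma ImD beta e1 R1 R2 : ImL beta e1 R1 -> ImL beta e1 R2 -> ImL beta e1 (R1 + R2).
Proof. by move=> [V1 <-] [V2 <-]; exists (V1 + V2); rewrite /Lop derivD; ring. Qed.

Lemma ImZ beta e1 a R : ImL beta e1 R -> ImL beta e1 (a *: R).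
Proof. by move=> [V <-]; exists (a *: V); rewrite /Lop derivZ -!mul_polyC; ring. Qed.

Lemma ImB beta e1 R1 R2 : ImL beta e1 R1 -> ImL beta e1 R2 -> ImL beta e1 (R1 - R2).
Proof.
move=> h1 h2; have := @ImD beta e1 _ _ h1 (@ImZ beta e1 (-1) _ h2).
by rewrite scaleN1r.
Qed.

Lemma Im_sum beta e1 n (F : 'I_n -> {poly C}) :
  (forall i, ImL beta e1 (F i)) -> ImL beta e1 (\sum_(i < n) F i).
Proof.
move=> h; apply: (big_ind (ImL beta e1)); [exact: ImL0| |by move=> i _; apply: h].
by move=> x y; apply: ImD.
Qed.

Lemma XderivXn n : 'X * ('X^n)^`() = (n%:R)%:P * ('X^n : {poly C}).
Proof.
rewrite derivXn; case: n => [|n]; first by rewrite !mulr0n mulr0 polyC0 mul0r.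
by rewrite /= mulrnAr -exprS mul_polyC scaler_nat.
Qed.

Lemma LopX beta e1 n : Lop beta e1 'X^n
  = (n%:R - beta) *: 'X^n - (2 * e1) *: 'X^(n.+2).
Proof.
rewrite /Lop XderivXn.
have -> : ('X^(n.+2) : {poly C}) = 'X^2 * 'X^n by rewrite -exprD.
rewrite -!mul_polyC; ring.
Qed.

Lemma chain_step (b e1 : C) M i : (e1 = 1 \/ e1 = -1) ->
  ImL (2 * (M%:R - b)) e1 ('X^(2 * i.+1) - (e1 * (i%:R - M%:R + b)) *: 'X^(2 * i)).
Proof.
move=> he1.
have h := @ImZ _ e1 (- (e1 / 2)) _ (ex_intro _ ('X^(2 * i)) (erefl (Lop (2 * (M%:R - b)) e1 'X^(2 * i)))).
rewrite LopX in h.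
have c1 : - (e1 / 2) * ((2 * i)%N%:R - 2 * (M%:R - b)) = - (e1 * (i%:R - M%:R + b)).
  by rewrite natrM; field.
have c2 : - (e1 / 2) * (2 * e1) = -1.
  by case: he1 => ->; field.
rewrite scalerBr !scalerA c1 c2 in h.
have -> : ('X^(2 * i.+1) : {poly C}) = 'X^((2 * i).+2) by rewrite mulnS.
move: h; rewrite scaleN1r scaleNr opprK; congr ImL.
rewrite addrC; congr (_ + _).
Qed.

Lemma chain_exact (b e1 : C) M j : (e1 = 1 \/ e1 = -1) ->
  ImL (2 * (M%:R - b)) e1 ('X^(2 * (M + j)) - (e1 ^+ j * poch b j) *: 'X^(2 * M)).
Proof.
move=> he1; elim: j => [|j IH].
  by rewrite addn0 expr0 poch0 mulr1 scale1r subrr; apply: ImL0.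
have hs := chain_step b e1 M (M + j) he1.
have -> : ('X^(2 * (M + j.+1)) : {poly C}) = 'X^(2 * (M + j).+1) by rewrite addnS.
have -> : 'X^(2 * (M + j).+1) - (e1 ^+ j.+1 * poch b j.+1) *: 'X^(2 * M) =
   ('X^(2 * (M + j).+1) - (e1 * ((M + j)%:R - M%:R + b)) *: 'X^(2 * (M + j)))
   + (e1 * (b + j%:R)) *: ('X^(2 * (M + j)) - (e1 ^+ j * poch b j) *: 'X^(2 * M)).
  rewrite natrD exprS pochS -!mul_polyC; ring.
by apply: ImD => //; apply: ImZ.
Qed.

Lemma chain_gen (b e1 : C) M i0 j : (e1 = 1 \/ e1 = -1) ->
  exists kap, ImL (2 * (M%:R - b)) e1 ('X^(2 * (i0 + j)) - kap *: 'X^(2 * i0)).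
Proof.
move=> he1; elim: j => [|j [kap IH]].
  by exists 1; rewrite addn0 scale1r subrr; apply: ImL0.
have hs := chain_step b e1 M (i0 + j) he1.
exists (e1 * ((i0 + j)%:R - M%:R + b) * kap).
have -> : ('X^(2 * (i0 + j.+1)) : {poly C}) = 'X^(2 * (i0 + j).+1) by rewrite addnS.
have -> : 'X^(2 * (i0 + j).+1) - (e1 * ((i0 + j)%:R - M%:R + b) * kap) *: 'X^(2 * i0) =
   ('X^(2 * (i0 + j).+1) - (e1 * ((i0 + j)%:R - M%:R + b)) *: 'X^(2 * (i0 + j)))
   + (e1 * ((i0 + j)%:R - M%:R + b)) *: ('X^(2 * (i0 + j)) - kap *: 'X^(2 * i0)).
  rewrite -!mul_polyC; ring.
by apply: ImD => //; apply: ImZ.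
Qed.


Lemma exists_U k n0 (nu e1 e2 : C) : (e1 = 1 \/ e1 = -1) ->
  2 * e1 * e2 * nu + k%:R = n0%:R ->
  let b := 2 * e1 * e2 * nu + 1 in
  exists U, Lop (2 * ((n0.+1)%:R - b)) e1 U = 'X^(2 * n0.+1) * (Ypoly k b e1) ^+ 2.
Proof.
move=> he1 hn b.
set M := n0.+1; set beta := 2 * (M%:R - b).
set F := hyp1F1reg k b; set G := F ^+ 2; set q := e1 *: ('X^2 : {poly C}).
have hP2 : (Ypoly k b e1) ^+ 2 = G \Po q by rewrite /Ypoly /G expr2 -comp_polyM -expr2.
have hexp : 'X^(2 * M) * (G \Po q)
    = \sum_(i < size G) (G`_i * e1 ^+ i) *: 'X^(2 * (M + i)).
  rewrite comp_polyE mulr_sumr; apply: eq_bigr => i _.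
  by rewrite exprZn -exprM scalerA -scalerAr -exprD mulnDr.
have e2one : e1 * e1 = 1 by case: he1 => ->; ring.
have hsG : (size G <= (2 * k).+1)%N.
  have hF : (size F <= k.+1)%N by rewrite /F hypE size_poly.
  apply: leq_trans (size_poly_exp_leq F 2) _.
  move: hF; case: (size F) => [|s] //= hs; lia.
have hsum : \sum_(i < size G) G`_i * e1 ^+ i * (e1 ^+ i * poch b i)
    = (k`!)%:R * poch b k.
  transitivity (\sum_(i < size G) poch b i * G`_i).
    apply: eq_bigr => i _.
    transitivity (poch b i * G`_i * (e1 * e1) ^+ i); first by rewrite exprMn; ring.
    by rewrite e2one expr1n mulr1.
  rewrite (big_ord_widen (2 * k).+1 (fun i => poch b i * G`_i)) // big_mkcond /=.
  rewrite -(obs_id k b _ (ltnSn (2 * k))) -/F -/G.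
  apply: eq_bigr => i _; case: ltnP => // hi.
  by rewrite nth_default // mulr0.
have hIm : ImL beta e1 ('X^(2 * M) * (Ypoly k b e1) ^+ 2
    - ((k`!)%:R * poch b k) *: 'X^(2 * M)).
  rewrite hP2 hexp -hsum scaler_suml -sumrB.
  apply: Im_sum => i.
  rewrite [X in ImL _ _ (_ - X)](_ : _ = (G`_i * e1 ^+ i) *: ((e1 ^+ i * poch b i) *: 'X^(2 * M))); last by rewrite scalerA.
  rewrite -scalerBr.
  by apply: ImZ; apply: chain_exact.
case: (eqVneq (poch b k) 0) => hpk.
  by move: hIm; rewrite hpk mulr0 scale0r subr0.
have hb2 : 2 * e1 * e2 * nu = n0%:R - k%:R by rewrite -hn; ring.
have hkn : (k <= n0)%N.
  case: (leqP k n0) => // hlt; exfalso; move: hpk; apply/negP; rewrite negbK.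
  have hi : (k - n0.+1 < k)%N by lia.
  rewrite /poch; apply/prodf_eq0; exists (Ordinal hi) => //=.
  by apply/eqP; rewrite /b hb2 natrB // mulrSr; ring.
have hX : ImL beta e1 'X^(2 * M).
  have hs := chain_step b e1 M k he1.
  have h0 : k%:R - M%:R + b = 0.
    by rewrite /M /b mulrSr hb2; ring.
  rewrite h0 mulr0 scale0r subr0 in hs.
  have [kap hk] := chain_gen b e1 M k.+1 (n0 - k) he1.
  rewrite (_ : (k.+1 + (n0 - k))%N = M) in hk; last by rewrite /M; lia.
  have := ImD _ _ _ _ hk (ImZ _ _ kap _ hs).
  by rewrite subrK.
have := ImD _ _ _ _ hIm (ImZ _ _ ((k`!)%:R * poch b k) _ hX).
by rewrite subrK.
Qed.


Lemma main_aux (nu : C) (k : nat) (e1 e2 : C) :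
  (e1 = 1 \/ e1 = -1) -> (e2 = 1 \/ e2 = -1) ->
  let E0 := e1 * (4 * k%:R + 2) + 4 * e2 * nu in
  let b := 2 * e1 * e2 * nu + 1 in
  (exists A B : {poly {poly C}},
     [/\ B.[E0%:P] != 0,
         A.[E0%:P] * logdY_den k b e1 = - (B.[E0%:P] * logdY_num k b e1) &
         exists G : {poly {poly C}},
           riccatiN nu A B = ('X - (E0%:P)%:P) ^+ 2 * G])
  <-> exists n : nat, 2 * e1 * e2 * nu + k%:R = n%:R.
Proof.
move=> he1 he2 E0 b.
have hb2 : 2 * e1 * e2 * nu = b - 1 by rewrite /b; ring.
set P := Ypoly k b e1.
have hQ : forall j, (P ^+ 2)`_(2 * j)%N = e1 ^+ j * ((hyp1F1reg k b) ^+ 2)`_j.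
  by move=> j; rewrite /P /Ypoly expr2 -comp_polyM -expr2 coef_comp_even.
have hXn0 : ('X : {poly C}) != 0 by rewrite polyX_eq0.
split.
- case=> A [B [hB0 hrel [G hG]]].
  have [a1 [b1 [h0 h1]]] := ric_cond E0 nu A B G hG.
  move: hB0 hrel h0 h1; set a0 := A.[E0%:P]; set b0 := B.[E0%:P] => hB0 hrel h0 h1.
  rewrite /logdY_den -/P in hrel.
  set W := a1 * b0 - a0 * b1.
  have hEs : 2%:R * a0 * W * 'X^2 + W * b0 * 'X - (W^`() * b0 - 2%:R * W * b0^`()) * 'X^2
      + 'X^2 * b0 ^+ 3 = 0.
    transitivity (b0 * N1p E0 nu a0 a1 b0 b1 - 2%:R * b1 * N0p E0 nu a0 b0).
      rewrite /N1p /N0p /W derivB !derivM; ring.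
    by rewrite h0 h1 !mulr0 subrr.
  set U := W * P ^+ 2; set D := b0 ^+ 2.
  have hD : D != 0 by rewrite expf_neq0.
  have hd0 : a0 * ('X * P) + b0 * logdY_num k b e1 = 0 by rewrite hrel addNr.
  have hUD : 'X * (U^`() * D - U * D^`())
      = ((1 - 2 * b)%:P + (2 * e1)%:P * 'X^2) * U * D + 'X * P ^+ 2 * D ^+ 2.
    apply: (mulfI hXn0); apply/eqP; rewrite -subr_eq0; apply/eqP.
    transitivity (b0 * P * (2%:R * 'X * W * (a0 * ('X * P) + b0 * logdY_num k b e1)
       - P * (2%:R * a0 * W * 'X^2 + W * b0 * 'X - (W^`() * b0 - 2%:R * W * b0^`()) * 'X^2
       + 'X^2 * b0 ^+ 3))).
      rewrite /U /D /logdY_num -/P -!mul_polyC !expr2 !derivM; ring.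
    by rewrite hd0 hEs; ring.
  have [d [c [U1 [hc hU1]]]] := reduce_ode U D (P ^+ 2) (1 - 2 * b) (2 * e1) hD hUD.
  case: (recur_obstr U1 (P ^+ 2) (hyp1F1reg k b ^+ 2) b e1 c d (2 * k).+1 he1 hc hQ hU1)
    => [[j [hj hbj]] | [N [hN hs]]].
  + exists (j.-1 + k)%N; rewrite hb2 hbj natrD.
    by case: j hj hbj => // j _ _ /=; rewrite mulrSr; ring.
  + have := obs_id k b N hN; rewrite hs => /esym/eqP.
    rewrite mulf_eq0 (negbTE (fact_neq0 k)) /= /poch => /prodf_eq0 [i _ /eqP hi].
    exists (k - i.+1)%N; rewrite hb2 natrB; last exact: ltn_ord i.
    have -> : b = - ((i : nat)%:R) by apply/eqP; rewrite -subr_eq0 opprK hi.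
    by rewrite mulrSr; ring.
- case=> n0 hn0.
  have [U hU] := exists_U k n0 nu e1 e2 he1 hn0.
  rewrite -/b -/P in hU.
  set Q0 : {poly C} := 'X^(2 * n0).
  set a0 := - (Q0 * P * logdY_num k b e1).
  set b0 := 'X * Q0 * P ^+ 2.
  set e := 'X - (E0%:P)%:P.
  exists (a0%:P + e * U%:P + e ^+ 2 * 0), (b0%:P + e * (0 : {poly C})%:P + e ^+ 2 * 0).
  have hev : forall (x y : {poly C}) (r : {poly {poly C}}),
      (x%:P + e * y%:P + e ^+ 2 * r).[E0%:P] = x.
    by move=> x y r; rewrite /e !hornerE subrr; ring.
  have hP0 : P != 0.
    apply/eqP => hP.
    have := coef_comp_even (hyp1F1reg k b) e1 k.
    rewrite -/(Ypoly k b e1) -/P hP coef0 hypE coef_poly ltnSn fco_k => /esym/eqP.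
    apply/negP; rewrite mulf_neq0 // expf_neq0 //.
      by case: he1 => ->; rewrite ?oppr_eq0 oner_eq0.
    by rewrite oppr_eq0 oner_eq0.
  have hb0 : b0 != 0 by rewrite /b0 !mulf_neq0 // ?expf_neq0.
  split.
  + by rewrite hev.
  + by rewrite !hev /a0 /b0 /logdY_den -/P; ring.
  + have [J hJ] := ric_expand E0 nu a0 U b0 0 0 0.
    exists J; rewrite hJ.
    have h0 : N0p E0 nu a0 b0 = 0.
      rewrite /a0 /b0 (N0_id k nu e1 e2 Q0 he1 he2) -/b -/P.
      by rewrite (kumP k b e1 he1) mulr0.
    have h1 : N1p E0 nu a0 U b0 0 = 0.
      rewrite /a0 /b0 /logdY_num -/P (N1_id E0 nu b e1 ((2 * n0)%N%:R) P Q0 U).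
      have hbeta : (2 * n0)%N%:R + 2 - 2 * b = 2 * ((n0.+1)%:R - b) :> C
        by rewrite natrM mulrSr; ring.
      rewrite hbeta -/(Lop _ e1 U) hU.
      have hX2 : ('X^(2 * n0.+1) : {poly C}) = 'X^2 * Q0 by rewrite /Q0 mulnS -exprD.
      rewrite hX2 subrr mulr0 mulr0 add0r /Q0 XderivXn subrr.
      by rewrite !mul0r.
    by rewrite h0 h1 polyC0 mulr0 !add0r.
Qed.

End Main.

(* M in C(z,E) regular at E = E0 is represented as A/B with A, B in C[z][E]
   and B(z,E0) <> 0; M(z,E0) = -Y'/Y is cross-multiplied; and
   H = riccatiN/B^2 = O((E-E0)^2) iff (E-E0)^2 divides riccatiN. *)
Theorem mainTheorem11 (C : numClosedFieldType) (nu : C) (k : nat) (e1 e2 : C) :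
  (e1 = 1 \/ e1 = -1) -> (e2 = 1 \/ e2 = -1) ->
  let E0 := e1 * (4 * k%:R + 2) + 4 * e2 * nu in
  let b := 2 * e1 * e2 * nu + 1 in
  (exists A B : {poly {poly C}},
     [/\ B.[E0%:P] != 0,
         A.[E0%:P] * logdY_den k b e1 = - (B.[E0%:P] * logdY_num k b e1) &
         exists G : {poly {poly C}},
           riccatiN nu A B = ('X - (E0%:P)%:P) ^+ 2 * G])
  <-> exists n : nat, 2 * e1 * e2 * nu + k%:R = n%:R.
Proof. exact: main_aux. Qed.
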